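(* Let $\{(a_i,b_i,m_i,n_i)\in(0,\infty)^2\times\mathbb{R}^2 : i\in\mathbb{Z}\}$ be a positive ABMN solution. Then: (1) the solution is strict, i.e. $m_{i+1}>m_i$ and $n_i>n_{i+1}$ for all $i\in\mathbb{Z}$; (2) the limits $m_{-\infty}=\lim_{k\to\infty}m_{-k}$, $m_\infty=\lim_{k\to\infty}m_k$, $n_{-\infty}=\lim_{k\to\infty}n_{-k}$, $n_\infty=\lim_{k\to\infty}n_k$ exist in $\mathbb{R}\cup\{\pm\infty\}$ and satisfy $m_\infty>m_{-\infty}$ and $n_{-\infty}>n_\infty$; (3) these four limits are real numbers; in particular the Mina margin $\frac{n_{-\infty}-n_\infty}{m_\infty-m_{-\infty}}$ is a positive finite real number.
   Context: The ABMN system on $\mathbb{Z}$ is the following set of equations in real variables $a_i,b_i,m_i,n_i$ ($i\in\mathbb{Z}$), with $a_i,b_i\ge 0$ always assumed: for every $i\in\mathbb{Z}$, $(a_i+b_i)(m_i+a_i)=a_im_{i+1}+b_im_{i-1}$; $(a_i+b_i)(n_i+b_i)=a_in_{i+1}+b_in_{i-1}$; $(a_i+b_i)^2=b_i(m_{i+1}-m_{i-1})$; $(a_i+b_i)^2=a_i(n_{i-1}-n_{i+1})$. A solution is positive if $a_i>0$ and $b_i>0$ for all $i$; it is strict if $m_{i+1}>m_i$ and $n_i>n_{i+1}$ for all $i$. Its boundary data is $(m_{-\infty},m_\infty,n_{-\infty},n_\infty)$, the limits $\lim_{k\to\infty}m_{-k}$, $\lim_{k\to\infty}m_k$, $\lim_{k\to\infty}n_{-k}$,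 $\lim_{k\to\infty}n_k$ (when they exist), and its Mina margin is $\frac{n_{-\infty}-n_\infty}{m_\infty-m_{-\infty}}$. *)

(* Defs.v *)
From Stdlib Require Import Reals ZArith.
From Coquelicot Require Import Coquelicot.
Open Scope R_scope.

Definition ABMN (a b m n : Z -> R) : Prop :=
  forall i : Z,
    (a i + b i) * (m i + a i) = a i * m (i + 1)%Z + b i * m (i - 1)%Z /\
    (a i + b i) * (n i + b i) = a i * n (i + 1)%Z + b i * n (i - 1)%Z /\
    (a i + b i) ^ 2 = b i * (m (i + 1)%Z - m (i - 1)%Z) /\
    (a i + b i) ^ 2 = a i * (n (i - 1)%Z - n (i + 1)%Z).

Definition positive_sol (a b : Z -> R) : Prop :=
  forall i : Z, 0 < a i /\ 0 < b i.

Definition strict_sol (m n : Z -> R) : Prop :=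
  forall i : Z, m i < m (i + 1)%Z /\ n (i + 1)%Z < n i.

Definition to_minus (x : Z -> R) : nat -> R := fun k => x (- Z.of_nat k)%Z.
Definition to_plus (x : Z -> R) : nat -> R := fun k => x (Z.of_nat k).

Definition mina_margin (mL mR nL nR : R) : R := (nL - nR) / (mR - mL).

(* Main.v *)
Require Import Defs.
From Stdlib Require Import Reals ZArith Lra Lia Psatz.
From Coquelicot Require Import Coquelicot.
Open Scope R_scope.

Lemma diffs (a b m n : Z -> R) : positive_sol a b -> ABMN a b m n ->
  forall i : Z,
    m (i + 1)%Z - m i = 2 * a i + b i /\
    b i * (m i - m (i - 1)%Z) = a i ^ 2 /\
    n (i - 1)%Z - n i = a i + 2 * b i /\
    a i * (n i - n (i + 1)%Z) = b i ^ 2.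
Proof.
  intros Hp H i. destruct (Hp i) as [ha hb]. destruct (H i) as [e1 [e2 [e3 e4]]].
  set (s := a i + b i) in *.
  assert (hs : 0 < s) by (unfold s; lra).
  set (x := m (i+1)%Z - m i). set (y := m i - m (i-1)%Z).
  assert (L1 : a i * x - b i * y = s * a i) by (unfold x, y, s in *; nra).
  assert (L3 : s ^ 2 = b i * (x + y)) by (unfold x, y; rewrite e3; ring).
  assert (Hx : s * x = s * (s + a i)) by (unfold s in *; nra).
  assert (Hx' : x = s + a i).
  { apply Rmult_eq_reg_l with s; [lra | lra]. }
  set (u := n (i-1)%Z - n i). set (v := n i - n (i+1)%Z).
  assert (M1 : a i * v - b i * u = - s * b i) by (unfold u, v, s in *; nra).
  assert (M3 : s ^ 2 = a i * (u + v)) by (unfold u, v; rewrite e4; ring).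
  assert (Hu : s * u = s * (s + b i)) by (unfold s in *; nra).
  assert (Hu' : u = s + b i).
  { apply Rmult_eq_reg_l with s; [lra | lra]. }
  split; [unfold s in Hx'; lra|].
  split; [unfold s in *; nra|].
  split; [unfold s in Hu'; lra|].
  unfold s in *; nra.
Qed.
Lemma growth (a b a' b' : R) : 0 < a -> 0 < b -> 0 < a' -> 0 < b' ->
  a' ^ 2 = b' * (2 * a + b) -> a * (a' + 2 * b') = b ^ 2 ->
  a / b + 2 * (a / b) ^ 2 <= a' / b'.
Proof.
  intros ha hb ha' hb' E1 E2.
  assert (K : a * (b + 2 * a) * b' <= a' * b ^ 2).
  { replace (a' * b ^ 2) with (a * a' ^ 2 + 2 * a * a' * b') by (rewrite <- E2; ring).
    rewrite E1. assert (0 < a * a' * b') by (repeat apply Rmult_lt_0_compat; lra). nra. }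
  assert (Eq : a' / b' - (a / b + 2 * (a / b) ^ 2) =
               (a' * b ^ 2 - a * (b + 2 * a) * b') / (b' * b ^ 2)) by (field; lra).
  assert (0 <= (a' * b ^ 2 - a * (b + 2 * a) * b') / (b' * b ^ 2)).
  { apply Rdiv_le_0_compat; [lra | apply Rmult_lt_0_compat; [lra | apply pow_lt; lra]]. }
  lra.
Qed.

Lemma ratio_le (a b c : R) : 0 < a -> 0 < b -> 0 <= c -> c * b <= a -> c * a <= a * a / b.
Proof.
  intros ha hb hc h.
  apply Rmult_le_reg_r with b; [lra|].
  replace (a * a / b * b) with (a * a) by (field; lra). nra.
Qed.

Lemma fwd_nat (A B M N : nat -> R)
  (pos : forall k, 0 < A k /\ 0 < B k)
  (H1 : forall k, M (S k) - M k = 2 * A k + B k)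
  (H2 : forall k, B (S k) * (M (S k) - M k) = A (S k) ^ 2)
  (H3 : forall k, A k * (N k - N (S k)) = B k ^ 2)
  (H4 : forall k, N k - N (S k) = A (S k) + 2 * B (S k)) :
  (exists l : R, is_lim_seq M l) /\ (exists l : R, is_lim_seq N l).
Proof.
  set (t := fun k => A k / B k).
  assert (tpos : forall k, 0 < t k).
  { intro k; destruct (pos k); unfold t; apply Rdiv_lt_0_compat; lra. }
  assert (tg : forall k, t k + 2 * (t k) ^ 2 <= t (S k)).
  { intro k; unfold t. destruct (pos k); destruct (pos (S k)).
    apply growth; try lra.
    - rewrite <- H2, H1; ring.
    - rewrite <- H3, H4; ring. }
  set (t0 := t 0%nat).
  assert (t0p : 0 < t0) by apply tpos.
  assert (tlin : forall k, t0 + 2 * INR k * t0 ^ 2 <= t k).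
  { induction k.
    - simpl. unfold t0; lra.
    - rewrite S_INR. specialize (tg k).
      assert (t0 <= t k) by (assert (0 <= INR k) by apply pos_INR; nra).
      assert (t0 ^ 2 <= t k ^ 2) by nra. nra. }
  assert (tge : forall k, t0 <= t k).
  { intro k; specialize (tlin k); assert (0 <= INR k) by apply pos_INR; nra. }
  destruct (INR_archimed (2 * t0 ^ 2) 2) as [K HK]; [nra|].
  assert (tbig : forall k, (K <= k)%nat -> 2 <= t k).
  { intros k hk. apply le_INR in hk. specialize (tlin k). nra. }
  assert (abig : forall k, (K <= k)%nat -> 2 * B k <= A k).
  { intros k hk. specialize (tbig k hk). destruct (pos k). unfold t in tbig.
    apply Rmult_le_compat_r with (r := B k) in tbig; [|lra].
    replace (A k / B k * B k) with (A k) in tbig by (field; lra). lra. }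
  assert (at0 : forall k, t0 * B k <= A k).
  { intros k. specialize (tge k). destruct (pos k). unfold t in tge.
    apply Rmult_le_compat_r with (r := B k) in tge; [|lra].
    replace (A k / B k * B k) with (A k) in tge by (field; lra). lra. }
  set (d := fun k => M (S k) - M k).
  set (e := fun k => N k - N (S k)).
  assert (dpos : forall k, 0 < d k).
  { intro k; unfold d; rewrite H1; destruct (pos k); lra. }
  assert (epos : forall k, 0 < e k).
  { intro k; unfold e; rewrite H4; destruct (pos (S k)); lra. }
  assert (ed : forall k c, 0 <= c -> c * B (S k) <= A (S k) ->
            c ^ 3 * e (S k) <= d k).
  { intros k c hc hcb. destruct (pos (S k)) as [ha hb].
    set (x := A (S k)) in *. set (y := B (S k)) in *.
    assert (Ed : y * d k = x ^ 2) by (exact (H2 k)).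
    assert (Ee : x * e (S k) = y ^ 2) by (exact (H3 (S k))).
    assert (c ^ 3 * y ^ 3 <= x ^ 3).
    { replace (c ^ 3 * y ^ 3) with ((c * y) ^ 3) by ring.
      apply pow_incr; nra. }
    assert (x * y * (c ^ 3 * e (S k)) <= x * y * d k).
    { replace (x * y * (c ^ 3 * e (S k))) with (c ^ 3 * y * (x * e (S k))) by ring.
      replace (x * y * d k) with (x * (y * d k)) by ring.
      rewrite Ee, Ed. lra. }
    apply Rmult_le_reg_l with (x * y); [apply Rmult_lt_0_compat|]; lra. }
  assert (dd : forall k, (K <= S k)%nat -> d (S (S k)) <= d k / 4).
  { intros k hk. specialize (ed k 2 ltac:(lra) (abig _ hk)).
    assert (d (S (S k)) <= 2 * e (S k)).
    { unfold d, e. rewrite H1, H4. destruct (pos (S (S k))). lra. }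
    lra. }
  set (Q := fun k => M k + 4/3 * (d k + d (S k))).
  assert (Qdec : forall j, Q (K + j)%nat <= Q K).
  { induction j.
    - rewrite Nat.add_0_r; lra.
    - replace (K + S j)%nat with (S (K + j)) by lia.
      assert (d (S (S (K + j))) <= d (K + j)%nat / 4) by (apply dd; lia).
      assert (Q (S (K + j)) <= Q (K + j)%nat).
      { unfold Q. fold (d (K + j)%nat).
        replace (M (S (K + j))) with (M (K + j)%nat + d (K + j)%nat) by (unfold d; ring).
        lra. }
      lra. }
  assert (Minc : forall k j, M k <= M (k + j)%nat).
  { intros k j; induction j.
    - rewrite Nat.add_0_r; lra.
    - replace (k + S j)%nat with (S (k + j)) by lia.
      specialize (dpos (k + j)%nat); unfold d in dpos; lra. }
  assert (Mbd : forall k, M k <= Q K).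
  { intro k. specialize (Minc k K). rewrite Nat.add_comm in Minc.
    specialize (Qdec k). unfold Q in *.
    pose proof (dpos (K + k)%nat). pose proof (dpos (S (K + k))). lra. }
  split.
  - apply ex_finite_lim_seq_incr with (Q K).
    + intro k; specialize (dpos k); unfold d in dpos; lra.
    + exact Mbd.
  - set (P := fun k => t0 ^ 3 * N (S k) + M k).
    assert (Pinc : forall k, P 0%nat <= P k).
    { induction k; [lra|].
      assert (t0 ^ 3 * e (S k) <= d k) by (apply ed; [lra | apply at0]).
      unfold P in *. unfold e, d in *. lra. }
    assert (t03 : 0 < t0 ^ 3) by (apply pow_lt; lra).
    apply ex_finite_lim_seq_decr with ((P 0%nat - Q K) / t0 ^ 3).
    + intro k; specialize (epos k); unfold e in epos; lra.
    + assert (Hs : forall k, (P 0%nat - Q K) / t0 ^ 3 <= N (S k)).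
      { intro k. specialize (Pinc k). specialize (Mbd k). assert (Pk : P k = t0 ^ 3 * N (S k) + M k) by reflexivity.
        apply Rmult_le_reg_l with (t0 ^ 3); [lra|].
        replace (t0 ^ 3 * ((P 0%nat - Q K) / t0 ^ 3)) with (P 0%nat - Q K)
          by (field; lra). lra. }
      intros [|k]; [|apply Hs].
      specialize (Hs 0%nat). specialize (epos 0%nat). unfold e in epos. lra.
Qed.

Lemma fwd (a b m n : Z -> R) : positive_sol a b -> ABMN a b m n ->
  (exists l : R, is_lim_seq (to_plus m) l) /\ (exists l : R, is_lim_seq (to_plus n) l).
Proof.
  intros Hp H. pose proof (diffs a b m n Hp H) as D.
  assert (ZS : forall k, Z.of_nat (S k) = (Z.of_nat k + 1)%Z) by lia.
  apply (fwd_nat (to_plus a) (to_plus b) (to_plus m) (to_plus n)); intro k; unfold to_plus.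
  - apply Hp.
  - rewrite ZS. apply (D (Z.of_nat k)).
  - rewrite ZS. destruct (D (Z.of_nat k + 1)%Z) as [_ [X _]].
    replace (Z.of_nat k + 1 - 1)%Z with (Z.of_nat k) in X by lia. exact X.
  - rewrite ZS. apply (D (Z.of_nat k)).
  - rewrite ZS. destruct (D (Z.of_nat k + 1)%Z) as [_ [_ [X _]]].
    replace (Z.of_nat k + 1 - 1)%Z with (Z.of_nat k) in X by lia. exact X.
Qed.

Lemma sym (a b m n : Z -> R) : positive_sol a b -> ABMN a b m n ->
  positive_sol (fun j => b (- j)%Z) (fun j => a (- j)%Z) /\
  ABMN (fun j => b (- j)%Z) (fun j => a (- j)%Z) (fun j => n (- j)%Z) (fun j => m (- j)%Z).
Proof.
  intros Hp H. split.
  - intro j; destruct (Hp (- j)%Z); split; assumption.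
  - intro j. replace (- (j + 1))%Z with (- j - 1)%Z by lia.
    replace (- (j - 1))%Z with (- j + 1)%Z by lia.
    destruct (H (- j)%Z) as [e1 [e2 [e3 e4]]].
    split; [lra|]. split; [lra|]. split; [lra|]. lra.
Qed.

Theorem mainTheorem1 (a b m n : Z -> R) :
  positive_sol a b -> ABMN a b m n ->
  strict_sol m n /\
  (exists mL mR nL nR : Rbar,
      is_lim_seq (to_minus m) mL /\ is_lim_seq (to_plus m) mR /\
      is_lim_seq (to_minus n) nL /\ is_lim_seq (to_plus n) nR /\
      Rbar_lt mL mR /\ Rbar_lt nR nL) /\
  (exists mL mR nL nR : R,
      is_lim_seq (to_minus m) mL /\ is_lim_seq (to_plus m) mR /\
      is_lim_seq (to_minus n) nL /\ is_lim_seq (to_plus n) nR /\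
      0 < mina_margin mL mR nL nR).
Proof.
  intros Hp H. pose proof (diffs a b m n Hp H) as D.
  assert (St : strict_sol m n).
  { intro i. destruct (D i) as [X _]. destruct (D (i + 1)%Z) as [_ [_ [Y _]]].
    replace (i + 1 - 1)%Z with i in Y by lia.
    destruct (Hp i); destruct (Hp (i + 1)%Z). split; lra. }
  destruct (fwd a b m n Hp H) as [[mR HmR] [nR HnR]].
  destruct (sym a b m n Hp H) as [Hp' H'].
  destruct (fwd _ _ _ _ Hp' H') as [[nL HnL] [mL HmL]].
  change (is_lim_seq (to_minus n) nL) in HnL.
  change (is_lim_seq (to_minus m) mL) in HmL.
  assert (ZS : forall k, Z.of_nat (S k) = (Z.of_nat k + 1)%Z) by lia.
  assert (mp : forall k, to_plus m k <= to_plus m (S k)).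
  { intro k; unfold to_plus; rewrite ZS; destruct (St (Z.of_nat k)); lra. }
  assert (np : forall k, to_plus n (S k) <= to_plus n k).
  { intro k; unfold to_plus; rewrite ZS; destruct (St (Z.of_nat k)); lra. }
  assert (mm : forall k, to_minus m (S k) <= to_minus m k).
  { intro k; unfold to_minus; rewrite ZS. destruct (St (- (Z.of_nat k + 1))%Z).
    replace (- (Z.of_nat k + 1) + 1)%Z with (- Z.of_nat k)%Z in * by lia. lra. }
  assert (nm : forall k, to_minus n k <= to_minus n (S k)).
  { intro k; unfold to_minus; rewrite ZS. destruct (St (- (Z.of_nat k + 1))%Z).
    replace (- (Z.of_nat k + 1) + 1)%Z with (- Z.of_nat k)%Z in * by lia. lra. }
  pose proof (is_lim_seq_incr_compare _ _ HmR mp 1%nat) as A1.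
  pose proof (is_lim_seq_decr_compare _ _ HmL mm 0%nat) as A2.
  pose proof (is_lim_seq_decr_compare _ _ HnR np 1%nat) as A3.
  pose proof (is_lim_seq_incr_compare _ _ HnL nm 0%nat) as A4.
  unfold to_plus, to_minus in A1, A2, A3, A4. simpl in A1, A2, A3, A4.
  destruct (St 0%Z) as [S1 S2]. simpl in S1, S2.
  assert (mL < mR) by lra. assert (nR < nL) by lra.
  split; [exact St|]. split.
  - exists mL, mR, nL, nR. repeat split; auto.
  - exists mL, mR, nL, nR. repeat split; auto.
    unfold mina_margin. apply Rdiv_lt_0_compat; lra.
Qed.
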